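(* Consider the linear regression model $y=Ug+v$ with $y\in\mathbb{R}^N$ observed, $U\in\mathbb{R}^{N\times n}$ known, $g\in\mathbb{R}^n$ unknown. Let $p>0$ be an integer such that $m:=N/p$ is an integer. Let the hyperparameter vector be $\theta=(\lambda,\beta,\Upsilon_1,\dots,\Upsilon_p)$, with the model: given $\theta$, $g\sim\mathcal N(0,\lambda K_\beta)$ with $\{K_\beta\}_{i,j}=\beta^{\max(i,j)}$; given $\theta$, $v\sim\mathcal N(0,\Sigma_v)$ independent of $g$, where $\Sigma_v=\mathrm{diag}\{\tau_1,\dots,\tau_N\}$ with $\tau_{(i-1)m+1}=\dots=\tau_{im}=\Upsilon_i$ for $i=1,\dots,p$; prior $p(\theta)=p(\lambda)p(\beta)\prod_{i=1}^p p(\Upsilon_i)$, with $p(\lambda)\propto\chi_{\mathbb{R}^+}(\lambda)$, $p(\beta)=\chi_{[0,1)}(\beta)$, and the $\Upsilon_i$ i.i.d. with either (Laplacian case) $p(\Upsilon)=\frac1{\sigma^2}e^{-\Upsilon/\sigma^2}$, $\Upsilon\ge0$, or (Student's t case, $\nu>2$) $p(\Upsilon)=\frac{((\nu-2)\sigma^2/2)^{\nu/2}}{\Gamma(\nu/2)}\Upsilon^{-\nu/2-1}e^{-(\nu-2)\sigma^2/(2\Upsilon)}$, $\Upsilon\ge0$, with $\sigma^2>0$ given. For $\theta$, let $P=(U^T\Sigma_v^{-1}U+(\lambda K_\beta)^{-1})^{-1}$ and $C=PU^T\Sigma_v^{-1}$. Consider the EM method for maximizing $\log(p(y\mid\theta)p(\theta))$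 with latent variable $g$: given $\hat\theta^{(k)}$, $\hat\theta^{(k+1)}=\arg\max_\theta\mathbb{E}_{p(g\mid y,\hat\theta^{(k)})}\big[\log p(y,g\mid\theta)+\sum_{i=1}^p\log p(\Upsilon_i)\big]$. Let $\hat C^{(k)},\hat P^{(k)}$ be $C,P$ evaluated at $\hat\theta^{(k)}$, $\hat y^{(k)}=U\hat C^{(k)}y$, $\hat S^{(k)}=U\hat P^{(k)}U^T$. Partition $\hat S^{(k)}$ into $m\times m$ blocks $\hat S^{(k)}_{ij}$, $i,j=1,\dots,p$, and $y$, $\hat y^{(k)}$ into consecutive blocks $Y_i,\hat Y_i^{(k)}\in\mathbb{R}^m$, $i=1,\dots,p$. Define $\hat\zeta_i^{(k)}=\|Y_i-\hat Y_i^{(k)}\|^2+\mathrm{Tr}\{\hat S^{(k)}_{ii}\}$. Then the updates $\hat\Upsilon_i^{(k+1)}$, $i=1,\dots,p$, are: in the Laplacian case $\hat\Upsilon_i^{(k+1)}=\frac{m\sigma^2}{4}\Big(\sqrt{1+\frac{8\hat\zeta_i^{(k)}}{m^2\sigma^2}}-1\Big)$; in the Student's t case $\hat\Upsilon_i^{(k+1)}=\frac{\hat\zeta_i^{(k)}+(\nu-2)\sigma^2}{\nu+2+m}$.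
   Context: $\chi_{\mathcal S}$ denotes the indicator function of the set $\mathcal S$. $\mathrm{Tr}$ denotes the trace and $\|\cdot\|$ the Euclidean norm. *)

(* Defs.v *)
From HB Require Import structures.
From mathcomp Require Import all_boot all_order all_algebra.
From mathcomp Require Import all_classical all_reals all_analysis.
Set Implicit Arguments. Unset Strict Implicit. Unset Printing Implicit Defensive.
Import Order.TTheory GRing.Theory Num.Theory.
Import numFieldNormedType.Exports.
Local Open Scope classical_set_scope.
Local Open Scope ring_scope.

Section Defs.
Variable R : realType.

Definition Gamma (s : R) : R :=
  fine (\int[@lebesgue_measure R]_(x in `]0%R, +oo[)
          (powR x (s - 1) * expR (- x))%:E)%E.

Definition prior_lap (sigma2 Ups : R) : R := sigma2^-1 * expR (- (Ups / sigma2)).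

Definition prior_t (nu sigma2 Ups : R) : R :=
  powR ((nu - 2) * sigma2 / 2) (nu / 2) / Gamma (nu / 2)
  * powR Ups (- (nu / 2) - 1) * expR (- ((nu - 2) * sigma2 / (2 * Ups))).

Lemma blk_idx_proof (p m : nat) (i : 'I_p) (j : 'I_m) : (i * m + j < p * m)%N.
Proof.
case: i => i /= Hi; case: j => j /= Hj.
have: (i * m + m <= p * m)%N by rewrite -mulSnr leq_mul2r Hi orbT.
by apply: leq_trans; rewrite ltn_add2l.
Qed.
Definition blk_idx (p m : nat) (i : 'I_p) (j : 'I_m) : 'I_(p * m) :=
  Ordinal (blk_idx_proof i j).

Lemma blk_of_proof (p m : nat) (k : 'I_(p * m)) : (k %/ m < p)%N.
Proof.
case: k => k /= Hk; case: m Hk => [|m] Hk; first by rewrite muln0 in Hk.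
by rewrite ltn_divLR.
Qed.
Definition blk_of (p m : nat) (k : 'I_(p * m)) : 'I_p := Ordinal (blk_of_proof k).

(* K_beta, with {K}_{i,j} = beta^{max(i,j)} for 1-based i,j *)
Definition Kbeta (n : nat) (beta : R) : 'M[R]_n :=
  \matrix_(i < n, j < n) beta ^+ (maxn i j).+1.

Definition Sigmav (p m : nat) (Ups : 'I_p -> R) : 'M[R]_(p * m) :=
  diag_mx (\row_(k < p * m) Ups (blk_of k)).

Definition gauss_pdf (d : nat) (S : 'M[R]_d) (x : 'cV[R]_d) : R :=
  powR (2 * pi) (- (d%:R / 2)) * powR (\det S) (- (1 / 2))
  * expR (- (1 / 2) * (x^T *m invmx S *m x) 0 0).

Definition joint_pdf (p m n : nat) (U : 'M[R]_(p * m, n)) (y : 'cV[R]_(p * m))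
    (lam beta : R) (Ups : 'I_p -> R) (g : 'cV[R]_n) : R :=
  gauss_pdf (Sigmav m Ups) (y - U *m g) * gauss_pdf (lam *: Kbeta n beta) g.

Definition Pmat (p m n : nat) (U : 'M[R]_(p * m, n)) (lam beta : R)
    (Ups : 'I_p -> R) : 'M[R]_n :=
  invmx (U^T *m invmx (Sigmav m Ups) *m U + invmx (lam *: Kbeta n beta)).
Definition Cmat (p m n : nat) (U : 'M[R]_(p * m, n)) (lam beta : R)
    (Ups : 'I_p -> R) : 'M[R]_(n, p * m) :=
  Pmat U lam beta Ups *m U^T *m invmx (Sigmav m Ups).

Definition zeta (p m n : nat) (U : 'M[R]_(p * m, n)) (y : 'cV[R]_(p * m))
    (lam beta : R) (Ups : 'I_p -> R) (i : 'I_p) : R :=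
  let yhat := U *m Cmat U lam beta Ups *m y in
  let S := U *m Pmat U lam beta Ups *m U^T in
  \sum_(j < m) (y (blk_idx i j) 0 - yhat (blk_idx i j) 0) ^+ 2
  + \sum_(j < m) S (blk_idx i j) (blk_idx i j).

Definition admissible (p : nat) (lam beta : R) (Ups : 'I_p -> R) : Prop :=
  0 < lam /\ 0 < beta < 1 /\ (forall i, 0 < Ups i).

(* EM objective: E_{g ~ posterior}[ log p(y,g|theta) + sum_i log p(Ups_i) ],
   the posterior being represented by the law of the random vector g under P *)
Definition EMobj (d : measure_display) (T : measurableType d)
    (P : probability T R) (p m n : nat) (U : 'M[R]_(p * m, n))
    (y : 'cV[R]_(p * m)) (g : T -> 'cV[R]_n) (prior : R -> R)
    (lam beta : R) (Ups : 'I_p -> R) : \bar R :=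
  (\int[P]_w (ln (joint_pdf U y lam beta Ups (g w))
               + \sum_(i < p) ln (prior (Ups i)))%:E)%E.

(* g is a random vector with mean mu and covariance Sig under P
   (second-order description of the posterior N(mu, Sig)) *)
Definition rv_mean_cov (d : measure_display) (T : measurableType d)
    (P : probability T R) (n : nat) (g : T -> 'cV[R]_n)
    (mu : 'cV[R]_n) (Sig : 'M[R]_n) : Prop :=
  (forall i, measurable_fun setT (fun w => g w i 0)) /\
  (forall i, P.-integrable setT (fun w => ((g w i 0) ^+ 2)%:E)) /\
  (forall i, (\int[P]_w (g w i 0)%:E = (mu i 0)%:E)%E) /\
  (forall i j, (\int[P]_w ((g w i 0 - mu i 0) * (g w j 0 - mu j 0))%:E
                 = (Sig i j)%:E)%E).

Definition is_argmax (p : nat) (Q : R -> R -> ('I_p -> R) -> \bar R)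
    (lam beta : R) (Ups : 'I_p -> R) : Prop :=
  admissible lam beta Ups /\
  forall lam' beta' Ups', admissible lam' beta' Ups' ->
    (Q lam' beta' Ups' <= Q lam beta Ups)%E.

End Defs.

(* Main.v *)
Require Import Defs.
From HB Require Import structures.
From mathcomp Require Import all_boot all_order all_algebra.
From mathcomp Require Import all_classical all_reals all_analysis.
From mathcomp Require Import measurable_realfun exponential_distribution ring lra zify.
Import Order.TTheory GRing.Theory Num.Theory.
Local Open Scope ring_scope.

Lemma ln_le_sub1 (R : realType) (x : R) : 0 < x -> ln x <= x - 1.
Proof.
move=> x0; have := @le_ln1Dx R (x - 1); rewrite addrCA subrr addr0; apply.
lra.
Qed.

Lemma crit_point (R : realType) (A B c a : R) : 0 < a -> 0 <= A -> 0 <= B ->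
  0 <= c -> 0 < A + c * a ->
  (forall u, 0 < u -> - A * ln u - B / u - c * u <= - A * ln a - B / a - c * a) ->
  B = a * (A + c * a).
Proof.
move=> a0 A0 B0 c0 S0 H.
set S := A + c * a.
have key : forall u, 0 < u -> (u - a) * (B - u * S) <= 0.
  move=> u u0; have := H u u0.
  have hL : ln (u / a) <= u / a - 1 by apply: ln_le_sub1; exact: divr_gt0.
  rewrite ln_div ?posrE // in hL.
  set L := ln u - ln a in hL *.
  have hL' : a * L <= u - a.
    have := ler_wpM2l (ltW a0) hL.
    have -> : a * (u / a - 1) = u - a by field; rewrite gt_eqF.
    by [].
  move=> Hu.
  have Hu' : - A * L - B / u + B / a - c * (u - a) <= 0.
    rewrite /L; lra.
  have Hm := ler_wpM2l (ltW (mulr_gt0 u0 a0)) Hu'.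
  rewrite mulr0 in Hm.
  have E : u * a * (- A * L - B / u + B / a - c * (u - a)) =
     - A * u * (a * L) - B * a + B * u - c * (u - a) * u * a.
    by field; rewrite !gt_eqF.
  rewrite E in Hm.
  have hA : A * u * (a * L) <= A * u * (u - a).
    by apply: ler_wpM2l => //; apply: mulr_ge0 => //; exact: ltW.
  rewrite /S; nra.
have S0' : 0 < S by [].
case: (ltgtP B (a * S)) => // hB.
-
  have q0 : 0 <= B / S by apply: divr_ge0 => //; exact: ltW.
  have qa : B / S < a by rewrite ltr_pdivrMr // mulrC.
  set u := (a + B / S) / 2.
  have u0 : 0 < u by rewrite /u; lra.
  have := key u u0.
  have h1 : u - a < 0 by rewrite /u; lra.
  have h2 : B - u * S < 0.
    have : B / S < u by rewrite /u; lra.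
    rewrite ltr_pdivrMr // => h; lra.
  nra.
- have qa : a < B / S by rewrite ltr_pdivlMr // mulrC.
  set u := (a + B / S) / 2.
  have u0 : 0 < u by rewrite /u; lra.
  have := key u u0.
  have h1 : 0 < u - a by rewrite /u; lra.
  have h2 : 0 < B - u * S.
    have : u < B / S by rewrite /u; lra.
    rewrite ltr_pdivlMr // => h; lra.
  nra.
Qed.

Section GammaSec.
Local Open Scope classical_set_scope.
Lemma Gamma_gt0 (R : realType) (s : R) : 1 < s -> 0 < Gamma s.
Proof.
move=> s1; set t := s - 1; have t0 : 0 < t by rewrite /t; lra.
rewrite /Gamma.
set f := fun x : R => powR x t * expR (- x).
have mf : measurable_fun setT f.
  apply: measurable_funM; first exact: measurable_powR.
  by apply: measurableT_comp => //; exact: measurable_funN.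
have mfE : forall D, measurable D -> measurable_fun D (EFin \o f).
  by move=> D mD; apply/measurable_EFinP; exact: measurable_funTS.
have f0 : forall x, 0 <= f x by move=> x; rewrite /f mulr_ge0 ?powR_ge0 ?expR_ge0.
set I := (\int[lebesgue_measure]_(x in `]0%R, +oo[) (f x)%:E)%E.
set K := expR (t * (ln (2 * t) - 1)).
have fle : forall x, 0 < x -> f x <= K * 2 * exponential_pdf (2^-1) x.
  move=> x x0; rewrite exponential_pdfE; last exact: ltW.
  rewrite /f /K.
  have -> : powR x t = expR (t * ln x) by rewrite /powR gt_eqF.
  have -> : expR (t * (ln (2 * t) - 1)) * 2 * (2^-1 * expR (- 2^-1 * x))
     = expR (t * (ln (2 * t) - 1) + - 2^-1 * x) by rewrite expRD; field.
  rewrite -expRD ler_expR.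
  have h : ln (x / (2 * t)) <= x / (2 * t) - 1.
    apply: ln_le_sub1; apply: divr_gt0 => //; lra.
  rewrite ln_div ?posrE ?mulr_gt0 // lnM ?posrE // in h.
  have h2 : t * (ln x - (ln 2 + ln t)) <= t * (x / (2 * t) - 1).
    by apply: ler_wpM2l => //; exact: ltW.
  have E : t * (x / (2 * t) - 1) = x / 2 - t by field; rewrite gt_eqF.
  rewrite E in h2.
  rewrite lnM ?posrE //; lra.
have Ifin : (I < +oo)%E.
  apply: (@le_lt_trans _ _ (\int[lebesgue_measure]_(x in `]0%R, +oo[)
     ((K * 2)%:E * (exponential_pdf (2^-1) x)%:E))%E).
    apply: ge0_le_integral => //.
    - by move=> x _; rewrite lee_fin.
    - exact: mfE.
    - apply: emeasurable_funM => //; apply/measurable_EFinP.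
      exact: measurable_funTS (measurable_exponential_pdf _).
    - move=> x; rewrite /= in_itv /= andbT => x0.
      by rewrite -EFinM lee_fin fle.
  rewrite ge0_integralZl //; last 3 first.
  - apply/measurable_EFinP; exact: measurable_funTS (measurable_exponential_pdf _).
  - by move=> x _; rewrite lee_fin exponential_pdf_ge0.
  - by rewrite lee_fin mulr_ge0 ?expR_ge0.
  apply: (@le_lt_trans _ _ ((K * 2)%:E * 1)%E); last by rewrite mule1 ltry.
  apply: lee_wpmul2l; first by rewrite lee_fin mulr_ge0 ?expR_ge0.
  rewrite -(@integral_exponential_pdf R (2^-1)) //.
  apply: ge0_subset_integral => //.
  - apply/measurable_EFinP; exact: measurable_exponential_pdf.
  - by move=> x _; rewrite lee_fin exponential_pdf_ge0.
have Ipos : (0 < I)%E.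
  apply: (@lt_le_trans _ _ (\int[lebesgue_measure]_(x in `[1%R, 2%R]) (f x)%:E)%E); last first.
    apply: ge0_subset_integral => //.
    - exact: mfE.
    - by move=> x _; rewrite lee_fin.
    - move=> x /=; rewrite !in_itv /= andbT => /andP[x1 _]; lra.
  apply: (@lt_le_trans _ _ (\int[lebesgue_measure]_(x in `[1%R, 2%R]) (cst (expR (-2))%:E x))%E).
    have M1 : (lebesgue_measure (`[1%R, 2%R] : set R) = 1)%E.
      rewrite lebesgue_measure_itv /= lte_fin ifT; last lra.
      by rewrite -EFinD; congr (_%:E); lra.
    rewrite integral_cst //.
    apply: (@lt_le_trans _ _ ((expR (-2))%:E * 1)%E).
      by rewrite mule1 lte_fin expR_gt0.
    apply: lee_wpmul2l; first by rewrite lee_fin expR_ge0.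
    rewrite -M1; exact: lexx.
  apply: ge0_le_integral => //.
  - by move=> x _; rewrite lee_fin expR_ge0.
  - exact: mfE.
  - move=> x /=; rewrite in_itv /= => /andP[x1 x2]; rewrite lee_fin /f.
    rewrite -[expR (-2)]mul1r; apply: ler_pM.
    + by [].
    + exact: expR_ge0.
    + rewrite -(powRr0 x); apply: ler_powR => //; exact: ltW.
    + rewrite ler_expR; lra.
have : I \is a fin_num by rewrite ge0_fin_numE // ltW.
move: Ipos Ifin; case: I => // r; by rewrite lte_fin.
Qed.

End GammaSec.

Lemma det_Kbeta_gt0 (R : realType) (n : nat) (beta : R) :
  0 < beta < 1 -> 0 < \det (Kbeta n beta).
Proof.
case/andP=> b0 b1.
set S : 'M[R]_n := \matrix_(i, j) ((i.+1 == j :> nat)%:R).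
set A : 'M[R]_n := 1%:M - S.
have SK : forall i j, (S *m Kbeta n beta) i j =
    if (i.+1 < n)%N then beta ^+ (maxn i.+1 j).+1 else 0.
  move=> i j; rewrite mxE.
  case: ifP => hi.
    rewrite (bigD1 (Ordinal hi)) //= big1 ?addr0.
      by rewrite !mxE /= eqxx mul1r.
    move=> k /negP hk; rewrite !mxE; case: eqP => [e|]; last by rewrite mul0r.
    by exfalso; apply: hk; apply/eqP/val_inj; rewrite /= e.
  rewrite big1 // => k _; rewrite !mxE; case: eqP => [e|]; last by rewrite mul0r.
  by move: (ltn_ord k); rewrite -e hi.
have AK : forall i j, (A *m Kbeta n beta) i j =
    beta ^+ (maxn i j).+1 - if (i.+1 < n)%N then beta ^+ (maxn i.+1 j).+1 else 0.
  move=> i j; rewrite mulmxBl mul1mx.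
  have E : forall (X Y : 'M[R]_n), (X - Y) i j = X i j - Y i j by move=> X Y; rewrite !mxE.
  by rewrite E SK mxE.
have detA : \det A = 1.
  rewrite -det_tr det_trig.
    rewrite big1 // => i _; rewrite !mxE eqxx /=.
    by rewrite (_ : (i.+1 == i :> nat) = false) ?subr0 // gtn_eqF.
  apply/forallP => i; apply/forallP => j; apply/implyP => hij.
  rewrite !mxE (_ : (j == i) = false); last by apply/negbTE; rewrite neq_ltn hij orbT.
  rewrite (_ : (j.+1 == i :> nat) = false) ?subrr //.
  by apply/negbTE; rewrite neq_ltn; apply/orP; right; apply: (ltn_trans hij).
have : 0 < \det (A *m Kbeta n beta).
  rewrite det_trig.
    apply: prodr_gt0 => i _; rewrite AK maxnn.
    case: ifP => hi.
      rewrite (_ : maxn i.+1 i = i.+1); last by apply/maxn_idPl.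
      rewrite !exprS mulrCA; have := mulr_gt0 b0 (exprn_gt0 i b0).
      set q := beta * beta ^+ i; nra.
    by rewrite subr0 exprn_gt0.
  apply/forallP => i; apply/forallP => j; apply/implyP => hij.
  rewrite AK; case: ifP => hi.
    rewrite (_ : maxn i j = j); last by apply/maxn_idPr; exact: ltnW.
    by rewrite (_ : maxn i.+1 j = j) ?subrr //; apply/maxn_idPr.
  by exfalso; move: (ltn_ord j) hi hij; lia.
by rewrite det_mulmx detA mul1r.
Qed.

Section Blocks.
Variables (R : realType) (p m : nat).
Hypothesis hm : (0 < m)%N.

Lemma blk_of_idx (i : 'I_p) (j : 'I_m) : blk_of (blk_idx i j) = i.
Proof.
apply: val_inj => /=; rewrite divnMDl // divn_small ?addn0 //.
Qed.

Definition modm (k : 'I_(p * m)) : 'I_m := Ordinal (ltn_pmod k hm).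

Lemma sum_blk (F : 'I_(p * m) -> R) :
  \sum_k F k = \sum_(i < p) \sum_(j < m) F (blk_idx i j).
Proof.
rewrite (partition_big (@blk_of p m) predT) //=.
apply: eq_bigr => i _.
rewrite (reindex_onto (blk_idx i) modm).
  apply: eq_bigl => j; rewrite blk_of_idx eqxx /=.
  apply/eqP/val_inj => /=; rewrite modnMDl modn_small //.
move=> k /eqP <-; apply: val_inj => /=.
by rewrite /= -divn_eq.
Qed.

Lemma ln_prod (I : finType) (f : I -> R) : (forall k, 0 < f k) ->
  ln (\prod_k f k) = \sum_k ln (f k).
Proof.
move=> hf; rewrite -!big_enum /=.
elim: (enum I) => [|k s IH]; first by rewrite !big_nil ln1.
rewrite !big_cons lnM ?IH // posrE //.
by apply: prodr_gt0 => j _.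
Qed.

Variable (Ups : 'I_p -> R).
Hypothesis hU : forall i, 0 < Ups i.

Lemma det_Sigmav : \det (Sigmav m Ups) = \prod_k Ups (@blk_of p m k).
Proof. by rewrite det_diag; apply: eq_bigr => k _; rewrite mxE. Qed.

Lemma det_Sigmav_gt0 : 0 < \det (Sigmav m Ups).
Proof. by rewrite det_Sigmav; apply: prodr_gt0 => k _. Qed.

Lemma ln_det_Sigmav : ln (\det (Sigmav m Ups)) = \sum_i m%:R * ln (Ups i).
Proof.
rewrite det_Sigmav ln_prod // sum_blk; apply: eq_bigr => i _.
under eq_bigr do rewrite blk_of_idx.
by rewrite sumr_const card_ord mulr_natl.
Qed.

Lemma invmx_Sigmav :
  invmx (Sigmav m Ups) = diag_mx (\row_k (Ups (@blk_of p m k))^-1).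
Proof.
have hu : Sigmav m Ups \in unitmx.
  by rewrite unitmxE unitfE gt_eqF // det_Sigmav_gt0.
have e : Sigmav m Ups *m diag_mx (\row_k (Ups (@blk_of p m k))^-1) = 1%:M.
  rewrite mulmx_diag -diag_const_mx; congr diag_mx.
  by apply/rowP => k; rewrite !mxE divff // gt_eqF.
by rewrite -[RHS](mulKmx hu) e mulmx1.
Qed.

Lemma quad_Sigmav (x : 'cV[R]_(p * m)) :
  (x^T *m invmx (Sigmav m Ups) *m x) 0 0 =
  \sum_i (Ups i)^-1 * \sum_j (x (blk_idx i j) 0) ^+ 2.
Proof.
rewrite invmx_Sigmav mul_mx_diag mxE sum_blk; apply: eq_bigr => i _.
rewrite mulr_sumr; apply: eq_bigr => j _.
by rewrite !mxE blk_of_idx expr2 [_ / _]mulrC -mulrA.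
Qed.

End Blocks.

Lemma ln_gauss (R : realType) (d : nat) (S : 'M[R]_d) (x : 'cV[R]_d) :
  0 < \det S ->
  ln (gauss_pdf S x) = ln (powR (2 * pi) (- (d%:R / 2)))
    - 2^-1 * ln (\det S) - 2^-1 * (x^T *m invmx S *m x) 0 0.
Proof.
move=> hS; rewrite /gauss_pdf.
have h2 : 0 < 2 * pi :> R by rewrite mulr_gt0 // pi_gt0.
rewrite lnM ?posrE ?mulr_gt0 ?powR_gt0 ?expR_gt0 //.
rewrite lnM ?posrE ?powR_gt0 // expRK ln_powR.
rewrite !ln_powR div1r; ring.
Qed.

Lemma gauss_gt0 (R : realType) (d : nat) (S : 'M[R]_d) (x : 'cV[R]_d) :
  0 < \det S -> 0 < gauss_pdf S x.
Proof.
move=> hS; rewrite /gauss_pdf.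
have h2 : 0 < 2 * pi :> R by rewrite mulr_gt0 // pi_gt0.
by rewrite !mulr_gt0 ?powR_gt0 ?expR_gt0.
Qed.

Section Expect.
Local Open Scope classical_set_scope.
Variables (R : realType) (d : measure_display) (T : measurableType d)
  (P : probability T R) (n : nat) (g : T -> 'cV[R]_n) (mu : 'cV[R]_n)
  (Sig : 'M[R]_n).
Hypothesis hg : rv_mean_cov P g mu Sig.

Definition Int (f : T -> R) := P.-integrable setT (EFin \o f).
Local Notation E f := (Rintegral P setT f).

Lemma Int_cst c : Int (fun=> c).
Proof. exact: finite_measure_integrable_cst. Qed.

Lemma IntD f h : Int f -> Int h -> Int (fun w => f w + h w).
Proof.
move=> hf hh; apply: (eq_integrable _ ((EFin \o f) \+ (EFin \o h))) => //.
  by apply: integrableD.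
all: try (by move=> w _ /=; rewrite EFinD).
Qed.

Lemma IntZ c f : Int f -> Int (fun w => c * f w).
Proof.
move=> hf; apply: (eq_integrable _ (fun w => (c%:E * (EFin \o f) w)%E)) => //.
  by apply: integrableZl.
all: try (by move=> w _ /=; rewrite EFinM).
Qed.

Lemma IntB f h : Int f -> Int h -> Int (fun w => f w - h w).
Proof.
move=> hf hh; apply: (eq_integrable _ (EFin \o (fun w => f w + (-1) * h w))) => //.
all: try (by move=> w _ /=; rewrite mulN1r).
exact: (IntD _ _ hf (IntZ (-1) _ hh)).
Qed.

Lemma Int_sum (I : finType) (F : I -> T -> R) :
  (forall i, Int (F i)) -> Int (fun w => \sum_i F i w).
Proof.
move=> hF; apply: (eq_integrable _ (fun w => \sum_(i <- enum I | true) (EFin \o F i) w)%E) => //.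
all: try (by move=> w _ /=; rewrite (big_morph _ EFinD erefl) enumT).
by apply: integrable_sum => // i _; exact: hF.
Qed.

Lemma Int_ext f h : (forall w, f w = h w) -> Int f -> Int h.
Proof. by move=> e; apply: eq_integrable => // w _ /=; rewrite e. Qed.

Lemma E_def f : Int f -> (\int[P]_w (f w)%:E)%E = (E f)%:E.
Proof. by move=> hf; rewrite /Rintegral fineK // integrable_fin_num. Qed.

Lemma ED f h : Int f -> Int h -> E (fun w => f w + h w) = E f + E h.
Proof. by move=> hf hh; rewrite RintegralD. Qed.

Lemma EZ c f : Int f -> E (fun w => c * f w) = c * E f.
Proof. by move=> hf; rewrite RintegralZl. Qed.

Lemma Ecst c : E (fun=> c) = c.
Proof.
have h : fine (P setT) = 1 by move: (probability_setT P) => /= ->.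
rewrite Rintegral_cst // -[RHS]mulr1; congr (_ * _); exact: h.
Qed.

Lemma sum_seq (I : Type) (s : seq I) (F : I -> T -> R) :
  (forall i, Int (F i)) ->
  Int (fun w => \sum_(i <- s) F i w) /\ E (fun w => \sum_(i <- s) F i w) = \sum_(i <- s) E (F i).
Proof.
move=> hF; elim: s => [|i s [IH1 IH2]].
  have -> : (fun w => \sum_(i <- [::]) F i w) = fun=> 0 by rewrite funeqE => w; rewrite big_nil.
  by rewrite big_nil; split; [exact: Int_cst | exact: Ecst].
have -> : (fun w => \sum_(j <- i :: s) F j w) = fun w => F i w + \sum_(j <- s) F j w.
  by rewrite funeqE => w; rewrite big_cons.
by rewrite big_cons; split; [exact: IntD | rewrite ED // IH2].
Qed.

Lemma E_sum (I : finType) (F : I -> T -> R) :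
  (forall i, Int (F i)) -> E (fun w => \sum_i F i w) = \sum_i E (F i).
Proof. by move=> hF; case: (@sum_seq I (index_enum I) F hF). Qed.

Lemma Int_g i : Int (fun w => g w i 0).
Proof.
case: hg => hm [hsq _].
have hG : Int (fun w => 1 + g w i 0 ^+ 2) by apply: IntD; [exact: Int_cst | exact: hsq].
apply: (le_integrable _ _ _ hG) => //.
- by apply/measurable_EFinP; exact: hm.
- move=> w _ /=; rewrite lee_fin.
  rewrite (ger0_norm (_ : 0 <= 1 + g w i 0 ^+ 2)); last by rewrite addr_ge0 ?sqr_ge0.
  set x := g w i 0; have := sqr_ge0 (`|x| - 1).
  rewrite -(real_normK (num_real x)); nra.
Qed.

Lemma Int_gg i j : Int (fun w => g w i 0 * g w j 0).
Proof.
case: hg => hm [hsq _].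
have hG : Int (fun w => g w i 0 ^+ 2 + g w j 0 ^+ 2) by apply: IntD; exact: hsq.
apply: (le_integrable _ _ _ hG) => //.
- apply/measurable_EFinP; exact: measurable_funM.
- move=> w _ /=; rewrite lee_fin.
  rewrite (ger0_norm (_ : 0 <= g w i 0 ^+ 2 + g w j 0 ^+ 2)); last by rewrite addr_ge0 ?sqr_ge0.
  set x := g w i 0; set z := g w j 0.
  rewrite normrM; have := sqr_ge0 (`|x| - `|z|).
  rewrite -(real_normK (num_real x)) -(real_normK (num_real z)); nra.
Qed.

Lemma Eg i : E (fun w => g w i 0) = mu i 0.
Proof. by case: hg => _ [_ [hmu _]]; rewrite /Rintegral hmu. Qed.

Lemma Ecov i j : E (fun w => (g w i 0 - mu i 0) * (g w j 0 - mu j 0)) = Sig i j.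
Proof. by case: hg => _ [_ [_ hc]]; rewrite /Rintegral hc. Qed.

Lemma Int_aff2 (c1 c2 : R) (a b : 'I_n -> R) :
  Int (fun w => (c1 + \sum_l a l * g w l 0) * (c2 + \sum_l b l * g w l 0)).
Proof.
apply: (@Int_ext (fun w => c1 * c2 + c1 * (\sum_l b l * g w l 0)
   + c2 * (\sum_l a l * g w l 0)
   + \sum_l \sum_l' (a l * b l') * (g w l 0 * g w l' 0))).
  move=> w.
  have <- : (\sum_i a i * g w i 0) * (\sum_l b l * g w l 0) =
     \sum_l \sum_l' (a l * b l') * (g w l 0 * g w l' 0).
    rewrite mulr_suml; apply: eq_bigr => l _; rewrite mulr_sumr; apply: eq_bigr => l' _; ring.
  ring.
apply: IntD; last by apply: Int_sum => l; apply: Int_sum => l'; apply: IntZ; exact: Int_gg.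
apply: IntD; last by apply: IntZ; apply: Int_sum => l; apply: IntZ; exact: Int_g.
apply: IntD; first exact: Int_cst.
by apply: IntZ; apply: Int_sum => l; apply: IntZ; exact: Int_g.
Qed.

Lemma quad_expand (N : nat) (x : 'cV[R]_N) (B : 'M[R]_N) :
  (x^T *m B *m x) 0 0 = \sum_a \sum_b x a 0 * B a b * x b 0.
Proof.
rewrite mxE exchange_big /=; apply: eq_bigr => b _.
rewrite mxE mulr_suml; apply: eq_bigr => a _; by rewrite mxE.
Qed.

Lemma Int_quad (N : nat) (v : 'cV[R]_N) (M : 'M[R]_(N, n)) (B : 'M[R]_N) :
  Int (fun w => ((v + M *m g w)^T *m B *m (v + M *m g w)) 0 0).
Proof.
apply: (@Int_ext (fun w => \sum_a \sum_b B a b *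
   ((v a 0 + \sum_l M a l * g w l 0) * (v b 0 + \sum_l M b l * g w l 0)))).
  move=> w; rewrite quad_expand; apply: eq_bigr => a _; apply: eq_bigr => b _.
  rewrite !mxE; ring.
apply: Int_sum => a; apply: Int_sum => b; apply: IntZ; exact: Int_aff2.
Qed.

Lemma Int_e l : Int (fun w => g w l 0 - mu l 0).
Proof. apply: IntB; [exact: Int_g | exact: Int_cst]. Qed.

Lemma Ee l : E (fun w => g w l 0 - mu l 0) = 0.
Proof. by rewrite RintegralB //; [rewrite Eg Ecst subrr | exact: Int_g | exact: Int_cst]. Qed.

Lemma Int_ee l l' : Int (fun w => (g w l 0 - mu l 0) * (g w l' 0 - mu l' 0)).
Proof.
apply: (@Int_ext (fun w => g w l 0 * g w l' 0 + (- mu l' 0) * g w l 0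
   + (- mu l 0) * g w l' 0 + mu l 0 * mu l' 0)).
  by move=> w; ring.
apply: IntD; last exact: Int_cst.
apply: IntD; last by apply: IntZ; exact: Int_g.
apply: IntD; first exact: Int_gg.
by apply: IntZ; exact: Int_g.
Qed.

Lemma Esq (z : R) (a : 'I_n -> R) :
  Int (fun w => (z + \sum_l a l * (g w l 0 - mu l 0)) ^+ 2) /\
  E (fun w => (z + \sum_l a l * (g w l 0 - mu l 0)) ^+ 2)
   = z ^+ 2 + \sum_l \sum_l' a l * a l' * Sig l l'.
Proof.
have hS : Int (fun w => \sum_l a l * (g w l 0 - mu l 0)).
  by apply: Int_sum => l; apply: IntZ; exact: Int_e.
have hQ : Int (fun w => \sum_l \sum_l' (a l * a l') * ((g w l 0 - mu l 0) * (g w l' 0 - mu l' 0))).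
  by apply: Int_sum => l; apply: Int_sum => l'; apply: IntZ; exact: Int_ee.
have ext : forall w, z ^+ 2 + (2 * z) * (\sum_l a l * (g w l 0 - mu l 0))
    + \sum_l \sum_l' (a l * a l') * ((g w l 0 - mu l 0) * (g w l' 0 - mu l' 0))
    = (z + \sum_l a l * (g w l 0 - mu l 0)) ^+ 2.
  move=> w.
  have -> : \sum_l \sum_l' (a l * a l') * ((g w l 0 - mu l 0) * (g w l' 0 - mu l' 0))
     = (\sum_l a l * (g w l 0 - mu l 0)) ^+ 2.
    rewrite expr2 mulr_suml; apply: eq_bigr => l _; rewrite mulr_sumr.
    by apply: eq_bigr => l' _; ring.
  ring.
have hI : Int (fun w => z ^+ 2 + (2 * z) * (\sum_l a l * (g w l 0 - mu l 0))
    + \sum_l \sum_l' (a l * a l') * ((g w l 0 - mu l 0) * (g w l' 0 - mu l' 0))).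
  apply: IntD => //; apply: IntD; [exact: Int_cst | exact: IntZ].
split; first exact: Int_ext hI.
have -> : (fun w => (z + \sum_l a l * (g w l 0 - mu l 0)) ^+ 2) =
   (fun w => z ^+ 2 + (2 * z) * (\sum_l a l * (g w l 0 - mu l 0))
    + \sum_l \sum_l' (a l * a l') * ((g w l 0 - mu l 0) * (g w l' 0 - mu l' 0))).
  by rewrite funeqE => w; rewrite ext.
rewrite ED //; last by apply: IntD; [exact: Int_cst | exact: IntZ].
rewrite ED //; [|exact: Int_cst | exact: IntZ].
rewrite Ecst EZ // E_sum; last by move=> l; apply: IntZ; exact: Int_e.
rewrite big1 ?mulr0 ?addr0; last by move=> l _; rewrite EZ ?Ee ?mulr0 //; exact: Int_e.
rewrite E_sum; last by move=> l; apply: Int_sum => l'; apply: IntZ; exact: Int_ee.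
congr (_ + _); apply: eq_bigr => l _.
rewrite E_sum; last by move=> l'; apply: IntZ; exact: Int_ee.
by apply: eq_bigr => l' _; rewrite EZ ?Ecov //; exact: Int_ee.
Qed.

Variables (p m : nat) (hm : (0 < m)%N) (U : 'M[R]_(p * m, n)) (y : 'cV[R]_(p * m)).

Definition W (i : 'I_p) (w : T) : R :=
  \sum_(j < m) ((y - U *m g w) (blk_idx i j) 0) ^+ 2.

Lemma resid_pw k w : (y - U *m g w) k 0 =
  (y k 0 - (U *m mu) k 0) + \sum_l (- U k l) * (g w l 0 - mu l 0).
Proof.
rewrite !mxE.
have -> : \sum_l (- U k l) * (g w l 0 - mu l 0) =
   \sum_l U k l * mu l 0 - \sum_l U k l * g w l 0.
  by rewrite -sumrB; apply: eq_bigr => l _; ring.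
ring.
Qed.

Lemma Int_W i : Int (W i).
Proof.
apply: (@Int_ext (fun w => \sum_(j < m) ((y (blk_idx i j) 0 - (U *m mu) (blk_idx i j) 0)
   + \sum_l (- U (blk_idx i j) l) * (g w l 0 - mu l 0)) ^+ 2)).
  by move=> w; rewrite /W; apply: eq_bigr => j _; rewrite resid_pw.
by apply: Int_sum => j; case: (Esq (y (blk_idx i j) 0 - (U *m mu) (blk_idx i j) 0)
   (fun l => - U (blk_idx i j) l)).
Qed.

Lemma E_W i : E (W i) =
  \sum_(j < m) (y (blk_idx i j) 0 - (U *m mu) (blk_idx i j) 0) ^+ 2
  + \sum_(j < m) (U *m Sig *m U^T) (blk_idx i j) (blk_idx i j).
Proof.
have -> : W i = (fun w => \sum_(j < m) ((y (blk_idx i j) 0 - (U *m mu) (blk_idx i j) 0)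
   + \sum_l (- U (blk_idx i j) l) * (g w l 0 - mu l 0)) ^+ 2).
  by rewrite funeqE => w; rewrite /W; apply: eq_bigr => j _; rewrite resid_pw.
rewrite E_sum; last first.
  by move=> j; case: (Esq (y (blk_idx i j) 0 - (U *m mu) (blk_idx i j) 0)
   (fun l => - U (blk_idx i j) l)).
rewrite -big_split /=; apply: eq_bigr => j _.
case: (Esq (y (blk_idx i j) 0 - (U *m mu) (blk_idx i j) 0)
   (fun l => - U (blk_idx i j) l)) => _ ->.
congr (_ + _); set k := blk_idx i j.
rewrite mxE exchange_big /=; apply: eq_bigr => l' _.
rewrite mxE mulr_suml; apply: eq_bigr => l _; rewrite !mxE; ring.
Qed.

Lemma E_W_ge0 i : 0 <= E (W i).
Proof.
by apply: Rintegral_ge0 => w _; rewrite /W; apply: sumr_ge0 => j _; exact: sqr_ge0.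
Qed.

Lemma EM_value (prior : R -> R) (lam beta : R) (Ups : 'I_p -> R) :
  (forall i, 0 < Ups i) -> 0 < \det (lam *: Kbeta n beta) ->
  EMobj P U y g prior lam beta Ups =
  (E (fun w => ln (powR (2 * pi) (- ((p * m)%:R / 2))) +
               ln (gauss_pdf (lam *: Kbeta n beta) (g w)))
   + \sum_i (- 2^-1 * (m%:R * ln (Ups i)) - 2^-1 * ((Ups i)^-1 * E (W i))
             + ln (prior (Ups i))))%:E.
Proof.
move=> hU hK.
set A0 := fun w => ln (powR (2 * pi) (- ((p * m)%:R / 2))) +
               ln (gauss_pdf (lam *: Kbeta n beta) (g w)).
set H := fun i w => - 2^-1 * (m%:R * ln (Ups i)) - 2^-1 * ((Ups i)^-1 * W i w)
             + ln (prior (Ups i)).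
have pw : forall w, ln (joint_pdf U y lam beta Ups (g w)) + \sum_i ln (prior (Ups i))
   = A0 w + \sum_i H i w.
  move=> w; rewrite /joint_pdf lnM ?posrE ?gauss_gt0 ?det_Sigmav_gt0 //.
  rewrite ln_gauss ?det_Sigmav_gt0 // ln_det_Sigmav // quad_Sigmav //.
  rewrite /A0 /H !big_split /= -!mulr_sumr.
  rewrite (_ : \sum_i (Ups i)^-1 * \sum_j ((y - U *m g w) (blk_idx i j) 0) ^+ 2
     = \sum_i (Ups i)^-1 * W i w) //. rewrite sumrN -mulr_sumr. ring.
have IA0 : Int A0.
  apply: IntD; first exact: Int_cst.
  apply: (@Int_ext (fun w => ln (powR (2 * pi) (- (n%:R / 2)))
    - 2^-1 * ln (\det (lam *: Kbeta n beta))
    - 2^-1 * (((0 : 'cV[R]_n) + 1%:M *m g w)^T *m invmx (lam *: Kbeta n beta)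
              *m ((0 : 'cV[R]_n) + 1%:M *m g w)) 0 0)).
    by move=> w; rewrite ln_gauss // add0r mul1mx.
  apply: IntB; first exact: Int_cst.
  by apply: IntZ; exact: Int_quad.
have IH : forall i, Int (H i).
  move=> i; apply: (@Int_ext (fun w => (- 2^-1 * (m%:R * ln (Ups i)) + ln (prior (Ups i)))
     + (- 2^-1 * (Ups i)^-1) * W i w)).
    by move=> w; rewrite /H; ring.
  by apply: IntD; [exact: Int_cst | apply: IntZ; exact: Int_W].
rewrite /EMobj.
rewrite (eq_integral (fun w => (A0 w + \sum_i H i w)%:E)); last first.
  by move=> w _; rewrite pw.
rewrite (@E_def (fun w => A0 w + \sum_i H i w)); last first.
  by apply: IntD => //; exact: Int_sum.
rewrite ED //; last exact: Int_sum.
rewrite E_sum //; congr ((_ + _)%:E); apply: eq_bigr => i _.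
have -> : H i = (fun w => (- 2^-1 * (m%:R * ln (Ups i)) + ln (prior (Ups i)))
     + (- 2^-1 * (Ups i)^-1) * W i w).
  by rewrite funeqE => w; rewrite /H; ring.
rewrite ED //; [|exact: Int_cst | apply: IntZ; exact: Int_W].
rewrite Ecst EZ //; last exact: Int_W.
ring.
Qed.

Definition Hfun (prior : R -> R) (i : 'I_p) (v : R) : R :=
  - 2^-1 * (m%:R * ln v) - 2^-1 * (v^-1 * E (W i)) + ln (prior v).

Lemma main_step (prior : R -> R) (lam1 beta1 : R) (Ups1 : 'I_p -> R) :
  is_argmax (EMobj P U y g prior) lam1 beta1 Ups1 ->
  forall i u, 0 < u -> Hfun prior i u <= Hfun prior i (Ups1 i).
Proof.
case=> [[l0 [/andP[b0 b1] hU]] hmax] i u u0.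
have hK : 0 < \det (lam1 *: Kbeta n beta1).
  by rewrite detZ mulr_gt0 ?exprn_gt0 // det_Kbeta_gt0 // b0 b1.
set Ups' := fun k => if k == i then u else Ups1 k.
have hU' : forall k, 0 < Ups' k by move=> k; rewrite /Ups'; case: eqP.
have := hmax lam1 beta1 Ups'.
rewrite !EM_value // lee_fin lerD2l.
rewrite (bigD1 i) //= [X in _ <= X](bigD1 i) //=.
rewrite (eq_bigr (fun k => - 2^-1 * (m%:R * ln (Ups1 k)) - 2^-1 * ((Ups1 k)^-1 * E (W k))
             + ln (prior (Ups1 k)))); last first.
  by move=> k /negbTE hk; rewrite /Ups' hk.
rewrite lerD2r /Ups' eqxx => h; apply: h.
by split => //; rewrite b0 b1.
Qed.

End Expect.

Theorem proposition1 (R : realType) (p m n : nat) (hp : (0 < p)%N) (hm : (0 < m)%N)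
    (U : 'M[R]_(p * m, n)) (y : 'cV[R]_(p * m)) (sigma2 nu : R)
    (hsigma2 : 0 < sigma2)
    (lamk betak : R) (Upsk : 'I_p -> R) (hk : admissible lamk betak Upsk)
    (d : measure_display) (T : measurableType d) (P : probability T R)
    (g : T -> 'cV[R]_n)
    (hg : rv_mean_cov P g (Cmat U lamk betak Upsk *m y) (Pmat U lamk betak Upsk))
    (lam1 beta1 : R) (Ups1 : 'I_p -> R) :
  (is_argmax (EMobj P U y g (prior_lap sigma2)) lam1 beta1 Ups1 ->
     forall i : 'I_p,
       Ups1 i = m%:R * sigma2 / 4
                * (Num.sqrt (1 + 8 * zeta U y lamk betak Upsk i
                                 / (m%:R ^+ 2 * sigma2)) - 1)) /\
  (2 < nu ->
   is_argmax (EMobj P U y g (prior_t nu sigma2)) lam1 beta1 Ups1 ->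
     forall i : 'I_p,
       Ups1 i = (zeta U y lamk betak Upsk i + (nu - 2) * sigma2)
                / (nu + 2 + m%:R)).
Proof.
have Ez : forall i, Rintegral P setT (W R d T n g p m U y i) = zeta U y lamk betak Upsk i.
  by move=> i; rewrite (@E_W _ _ _ _ _ _ _ _ hg) /zeta /= mulmxA.
have m0 : 0 < m%:R :> R by rewrite ltr0n.
split.
- move=> H i.
  have step := @main_step _ _ _ _ _ _ _ _ hg _ _ hm _ _ _ _ _ _ H i.
  have a0 : 0 < Ups1 i by case: H => [[_ [_ hU]] _]; exact: hU.
  have z0 := @E_W_ge0 _ _ _ P _ g _ _ U y i; rewrite Ez in z0.
  set a := Ups1 i in step a0 *; set z := zeta U y lamk betak Upsk i in z0 *.
  have eqH : forall v, 0 < v -> Hfun R d T P n g p m U y (prior_lap sigma2) i v =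
      ln sigma2^-1 + (- (m%:R / 2) * ln v - (z / 2) / v - sigma2^-1 * v).
    move=> v v0; rewrite /Hfun Ez /prior_lap lnM ?posrE ?invr_gt0 ?expR_gt0 // expRK.
    by rewrite -/z; field; rewrite !gt_eqF.
  have hc := @crit_point R (m%:R / 2) (z / 2) sigma2^-1 a a0.
  have e : z / 2 = a * (m%:R / 2 + sigma2^-1 * a).
    apply: hc.
    - by apply: divr_ge0 => //; exact: ltW.
    - by apply: divr_ge0.
    - by rewrite invr_ge0 ltW.
    - by rewrite addr_gt0 ?divr_gt0 ?mulr_gt0 ?invr_gt0.
    move=> u u0; have := step u u0.
    rewrite eqH // eqH // lerD2l; exact.
  have e2 : 1 + 8 * z / (m%:R ^+ 2 * sigma2) = (1 + 4 * a / (m%:R * sigma2)) ^+ 2.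
    have -> : z = 2 * (a * (m%:R / 2 + sigma2^-1 * a)) by rewrite -e; field.
    by field; rewrite !gt_eqF.
  rewrite e2 sqrtr_sqr ger0_norm; last first.
    by rewrite addr_ge0 // divr_ge0 ?mulr_ge0 // ltW.
  by field; rewrite !gt_eqF.
- move=> hnu H i.
  have step := @main_step _ _ _ _ _ _ _ _ hg _ _ hm _ _ _ _ _ _ H i.
  have a0 : 0 < Ups1 i by case: H => [[_ [_ hU]] _]; exact: hU.
  have z0 := @E_W_ge0 _ _ _ P _ g _ _ U y i; rewrite Ez in z0.
  set a := Ups1 i in step a0 *; set z := zeta U y lamk betak Upsk i in z0 *.
  set K1 := powR ((nu - 2) * sigma2 / 2) (nu / 2) / Gamma (nu / 2).
  have hb : 0 < (nu - 2) * sigma2 / 2 by apply: divr_gt0 => //; apply: mulr_gt0 => //; lra.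
  have hG : 0 < Gamma (nu / 2) by apply: Gamma_gt0; lra.
  have K10 : 0 < K1 by apply: divr_gt0; first exact: powR_gt0.
  have eqH : forall v, 0 < v -> Hfun R d T P n g p m U y (prior_t nu sigma2) i v =
      ln K1 + (- (m%:R / 2 + nu / 2 + 1) * ln v - ((z + (nu - 2) * sigma2) / 2) / v - 0 * v).
    move=> v v0; rewrite /Hfun Ez /prior_t -/K1.
    rewrite lnM ?posrE ?mulr_gt0 ?powR_gt0 ?expR_gt0 ?invr_gt0 //.
    rewrite lnM ?posrE ?powR_gt0 // ln_powR expRK.
    by rewrite -/z; field; rewrite !gt_eqF.
  have hc := @crit_point R (m%:R / 2 + nu / 2 + 1) ((z + (nu - 2) * sigma2) / 2) 0 a a0.
  have e : (z + (nu - 2) * sigma2) / 2 = a * (m%:R / 2 + nu / 2 + 1 + 0 * a).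
    apply: hc.
    - lra.
    - apply: divr_ge0 => //; apply: addr_ge0 => //; apply: mulr_ge0; lra.
    - by [].
    - lra.
    move=> u u0; have := step u u0.
    rewrite eqH // eqH // lerD2l; exact.
  have hd : nu + 2 + m%:R != 0 by rewrite gt_eqF //; lra.
  rewrite mul0r addr0 in e.
  apply: (mulIf hd); rewrite mulfVK //.
  have -> : z + (nu - 2) * sigma2 = 2 * ((z + (nu - 2) * sigma2) / 2) by field.
  by rewrite e; field.
Qed.
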